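(* Let $\phi$ be an affine equivariant integrator map, let $F\colon Y\to Z$ be a Gâteaux differentiable map between Banach spaces, let $f\in\mathfrak{X}(Y)$, and let $g\in\mathfrak{X}(Y\times Z)$ be the augmented vector field $g(y,z)=\bigl(f(y),F'(y)f(y)\bigr)$. Write $\widetilde f=\phi(f)$ and $\widetilde g=\phi(g)$. Then $\widetilde g(\widetilde y,\widetilde z)=\widetilde g\bigl(\widetilde y,F(\widetilde y)\bigr)$ for all $(\widetilde y,\widetilde z)\in Y\times Z$. Consequently, the condition $$\widetilde g\bigl(\widetilde y,F(\widetilde y)\bigr)=\bigl(\widetilde f(\widetilde y),F'(\widetilde y)\widetilde f(\widetilde y)\bigr)\quad\text{for all }\widetilde y\in Y$$ holds if and only if $\widetilde g(\widetilde y,\widetilde z)=\bigl(\widetilde f(\widetilde y),F'(\widetilde y)\widetilde f(\widetilde y)\bigr)$ for all $(\widetilde y,\widetilde z)\in Y\times Z$.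
   Context: All spaces are real Banach spaces; $\mathfrak{X}(Y)$ denotes the set of smooth vector fields on $Y$ (smooth maps $Y\to Y$). An integrator map $\phi$ is a collection of smooth maps $\phi_Y\colon\mathfrak{X}(Y)\to\mathfrak{X}(Y)$, one for each Banach space $Y$; one writes $\phi(f)=\phi_Y(f)$. For a Gâteaux differentiable map $\chi\colon Y\to U$, vector fields $f\in\mathfrak{X}(Y)$ and $g\in\mathfrak{X}(U)$ are $\chi$-related, written $f\sim_\chi g$, if $\chi'(y)f(y)=g(\chi(y))$ for all $y\in Y$. An integrator map $\phi$ is affine equivariant if for every affine map $A\colon Y\to U$ between Banach spaces, $f\sim_A g$ implies $\phi(f)\sim_A\phi(g)$. *)

(* Defs.v *)
From HB Require Import structures.
From mathcomp Require Import all_boot all_order all_algebra.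
From mathcomp Require Import all_classical all_reals all_analysis.
Set Implicit Arguments. Unset Strict Implicit. Unset Printing Implicit Defensive.
Import Order.TTheory GRing.Theory Num.Theory.
Import numFieldNormedType.Exports.
Local Open Scope classical_set_scope.
Local Open Scope ring_scope.

Section prod_complete.
Context {R : realType} {U V : completeNormedModType R}.
Lemma prod_complete (F : set_system ((U * V)%type : normedModType R)) : ProperFilter F -> cauchy F -> cvg F.
Proof.
move=> FF Fc.
have c1 : cauchy (fst @ F).
  move=> E entE; rewrite near_simpl -near2E near_map2.
  have : entourage [set xy : (U * V) * (U * V) | E (xy.1.1, xy.2.1) /\ setT (xy.1.2, xy.2.2)].
    exact: (prod_entP entE entourageT).
  by move/Fc; apply: (filterS (P := fun xy => _)) => -[x y] [].
have c2 : cauchy (snd @ F).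
  move=> E entE; rewrite near_simpl -near2E near_map2.
  have : entourage [set xy : (U * V) * (U * V) | setT (xy.1.1, xy.2.1) /\ E (xy.1.2, xy.2.2)].
    exact: (prod_entP entourageT entE).
  by move/Fc; apply: (filterS (P := fun xy => _)) => -[x y] [].
have cv1 : fst @ F --> lim (fst @ F) by exact: cauchy_cvg.
have cv2 : snd @ F --> lim (snd @ F) by exact: cauchy_cvg.
have cv12 : (x.1, x.2) @[x --> F] --> (nbhs (lim (fst @ F)), nbhs (lim (snd @ F))).
  by apply: cvg_pair.
apply/cvg_ex; exists (lim (fst @ F), lim (snd @ F)).
move=> P /cv12; rewrite /= /fmap /= /nbhs /=.
by apply: filterS; case.
Qed.
End prod_complete.

(* The Banach space Y x Z (product norm = max norm). *)
Definition prodB (R : realType) (Y Z : completeNormedModType R) : completeNormedModType R :=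
  HB.pack_for (completeNormedModType R) ((Y * Z)%type : normedModType R)
    (Uniform_isComplete.Build ((Y * Z)%type : normedModType R) (@prod_complete R Y Z)).


Fixpoint smooth_n (R : realType) (V W : normedModType R) (n : nat)
  (f : V -> W) : Prop :=
  match n with
  | O => continuous f
  | S m => (forall x, differentiable f x) /\
           (forall v : V, smooth_n m (fun x => 'd f x v))
  end.

Definition smooth (R : realType) (V W : normedModType R) (f : V -> W) : Prop :=
  forall n, smooth_n n f.

Definition gateaux_differentiable (R : realType) (V W : normedModType R)
  (F : V -> W) : Prop :=
  forall y : V,
    (forall v : V, derivable F y v) /\
    (forall (a : R) (u v : V), 'D_(a *: u + v) F y = a *: 'D_u F y + 'D_v F y) /\
    continuous (fun v : V => 'D_v F y).

Definition related (R : realType) (V W : normedModType R)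
  (chi : V -> W) (f : V -> V) (g : W -> W) : Prop :=
  forall y : V, 'D_(f y) chi y = g (chi y).

Definition affine_map (R : realType) (V W : normedModType R) (A : V -> W) : Prop :=
  exists (L : {linear V -> W}) (c : W), continuous L /\ forall x, A x = L x + c.

Definition integrator_map (R : realType)
  (phi : forall Y : completeNormedModType R, (Y -> Y) -> (Y -> Y)) : Prop :=
  forall (Y : completeNormedModType R) (f : Y -> Y), smooth f -> smooth (phi Y f).

Definition affine_equivariant (R : realType)
  (phi : forall Y : completeNormedModType R, (Y -> Y) -> (Y -> Y)) : Prop :=
  forall (Y U : completeNormedModType R) (A : Y -> U) (f : Y -> Y) (g : U -> U),
    affine_map A -> smooth f -> smooth g ->
    related A f g -> related A (phi Y f) (phi U g).

(* Main.v *)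
Require Import Defs.
From HB Require Import structures.
From mathcomp Require Import all_boot all_order all_algebra.
From mathcomp Require Import all_classical all_reals all_analysis.
Import Order.TTheory GRing.Theory Num.Theory.
Import numFieldNormedType.Exports.
Local Open Scope ring_scope.

Theorem proposition2p5 (R : realType)
  (phi : forall Y : completeNormedModType R, (Y -> Y) -> (Y -> Y))
  (Y Z : completeNormedModType R) (F : Y -> Z) (f : Y -> Y) :
  integrator_map phi -> affine_equivariant phi ->
  gateaux_differentiable F ->
  smooth f ->
  smooth (fun p : Y * Z => (f p.1, 'D_(f p.1) F p.1)) ->
  let g := fun p : Y * Z => (f p.1, 'D_(f p.1) F p.1) in
  let ft := phi Y f in
  let gt := phi (prodB Y Z) g in
  (forall (yt : Y) (zt : Z), gt (yt, zt) = gt (yt, F yt)) /\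
  ((forall yt : Y, gt (yt, F yt) = (ft yt, 'D_(ft yt) F yt)) <->
   (forall (yt : Y) (zt : Z), gt (yt, zt) = (ft yt, 'D_(ft yt) F yt))).
Proof.
move=> _ Haff _ _ sg g ft gt.
have key : forall (p : prodB Y Z) (k : prodB Y Z), k.1 = 0 -> gt (p + k) = gt p.
  move=> p k k1.
  pose A := fun q : prodB Y Z => q + k.
  have dA : forall (q v : prodB Y Z), 'D_v A q = v.
    move=> q v.
    have -> : A = (id : prodB Y Z -> prodB Y Z) \+ cst k by [].
    rewrite deriveD ?derive_id ?derive_cst ?addr0 //.
  have affA : affine_map A.
    exists (@idfun (prodB Y Z) : {linear prodB Y Z -> prodB Y Z}), k.
    by split => // x; apply: cvg_id.
  have relA : related A g g.
    move=> q; rewrite dA /g.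
    have -> : (A q).1 = q.1.
      rewrite /A; clear -k1; case: q => q1 q2; case: k k1 => k1 k2 /= ->. exact: addr0.
    by [].
  have := Haff _ _ A g g affA sg sg relA p.
  by rewrite dA.
have part1 : forall (yt : Y) (zt : Z), gt (yt, zt) = gt (yt, F yt).
  move=> yt zt.
  have := key (yt, zt) (0, F yt - zt) erefl.
  have -> : ((yt, zt) : prodB Y Z) + (0, F yt - zt) = (yt, F yt).
    have h1 : forall a : Y, a + 0 = a by move=> a; rewrite addr0.
    have h2 : forall a b : Z, b + (a - b) = a by move=> a b; rewrite addrC subrK.
    rewrite /add_pair /=; congr pair; [exact: h1 | exact: h2].
  by move=> <-.
split => //; split => H yt; last exact: H.
by move=> zt; rewrite part1 H.
Qed.
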